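(* Let $a,b,c,d,e,f,g>0$ with $b+c\ne f$, and let $X=(X^1,X^2)$ be a time-homogeneous Markov chain on $\{(0,0),(0,1),(1,0),(1,1)\}$ (states ordered as listed) with $X_0=(0,0)$ and generator $$\Lambda=\begin{pmatrix}-(a+b+c)&b&a&c\\0&-(d+e)&d&e\\0&0&-f&f\\0&0&g&-g\end{pmatrix}.$$ Then $X^2$ is not a Markov chain with respect to its own filtration $\mathbb F^{X^2}$ (and hence not with respect to $\mathbb F^X$ either).
   Context: $\mathbb F^{X^2}$ and $\mathbb F^X$ denote the natural filtrations of $X^2$ and $X$. *)

(* Defs.v *)
From HB Require Import structures.
From mathcomp Require Import all_boot all_order all_algebra.
From mathcomp Require Import all_classical all_reals all_analysis.
Set Implicit Arguments. Unset Strict Implicit. Unset Printing Implicit Defensive.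
Import Order.TTheory GRing.Theory Num.Theory.
Local Open Scope classical_set_scope.
Local Open Scope ring_scope.

(* State space {(0,0),(0,1),(1,0),(1,1)} encoded as 'I_4 in the listed order:
   0 = (0,0), 1 = (0,1), 2 = (1,0), 3 = (1,1). *)
Definition coord1 (i : 'I_4) : bool := (2 <= i)%N.
Definition coord2 (i : 'I_4) : bool := odd i.

Definition Lam (R : realType) (a b c d e f g : R) : 'M[R]_4 :=
  \matrix_(i < 4, j < 4)
    nth 0 (nth [::] [:: [:: -(a+b+c); b; a; c];
                        [:: 0; -(d+e); d; e];
                        [:: 0; 0; -f; f];
                        [:: 0; 0; g; -g]] i) j.

(* Pt is the transition function generated by L: Pt 0 = I and
   d/dt Pt t = Pt t * L (Kolmogorov forward equation); for a finite matrix
   this characterizes Pt t = exp(t L) uniquely. *)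
Definition is_transition_fn (R : realType) (L : 'M[R]_4) (Pt : R -> 'M[R]_4) :=
  Pt 0 = 1%:M /\
  forall (t : R) (i j : 'I_4),
    is_derive t 1 (fun s => Pt s i j) ((Pt t *m L) i j).

Definition markov_chain_from0 (R : realType) (d : measure_display)
    (Omega : measurableType d) (P : probability Omega R)
    (Pt : R -> 'M[R]_4) (X : R -> Omega -> 'I_4) :=
  (forall (t : R) (i : 'I_4), measurable [set w | X t w = i]) /\
  forall (n : nat) (t : nat -> R) (x : nat -> 'I_4),
    0 <= t 0%N ->
    (forall k, (k < n)%N -> t k <= t k.+1) ->
    P [set w | forall k, (k <= n)%N -> X (t k) w = x k] =
      (Pt (t 0%N) ord0 (x 0%N) *
       \prod_(k < n) Pt (t k.+1 - t k) (x k) (x k.+1))%:E.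

(* A process Y with discrete (boolean) values is Markov with respect to its own
   natural filtration: for all 0 <= s_0 <= ... <= s_n <= u and values,
   P(Y_u = y | Y_{s_0}=y_0,...,Y_{s_n}=y_n) = P(Y_u = y | Y_{s_n} = y_n)
   whenever the conditioning event has positive probability; written here in
   multiplied-out form (trivially true when the conditioning event is null). *)
Definition markov_own_filtration (R : realType) (d : measure_display)
    (Omega : measurableType d) (P : probability Omega R)
    (Y : R -> Omega -> bool) :=
  forall (n : nat) (s : nat -> R) (u : R) (y : nat -> bool) (z : bool),
    0 <= s 0%N ->
    (forall k, (k < n)%N -> s k <= s k.+1) ->
    s n <= u ->
    (P [set w | Y u w = z /\ forall k, (k <= n)%N -> Y (s k) w = y k] *
     P [set w | Y (s n) w = y n])%E =
    (P [set w | Y u w = z /\ Y (s n) w = y n] *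
     P [set w | forall k, (k <= n)%N -> Y (s k) w = y k])%E.

(* Main.v *)
Require Import Defs.
From HB Require Import structures.
From mathcomp Require Import all_boot all_order all_algebra.
From mathcomp Require Import all_classical all_reals all_analysis.
From mathcomp Require Import ring lra.
Import Order.TTheory GRing.Theory Num.Theory.
Local Open Scope classical_set_scope.
Local Open Scope ring_scope.

Notation o0 := (@Ordinal 4 0 isT).
Notation o1 := (@Ordinal 4 1 isT).
Notation o2 := (@Ordinal 4 2 isT).
Notation o3 := (@Ordinal 4 3 isT).

Lemma sum4 (V : nmodType) (F : 'I_4 -> V) :
  \sum_(i < 4) F i = F o0 + F o1 + F o2 + F o3.
Proof.
rewrite !big_ord_recl big_ord0 addr0 !addrA.
by congr (_ + _ + _ + _); congr F; apply: val_inj.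
Qed.

Lemma ord4_cases (i : 'I_4) : [\/ i = o0, i = o1, i = o2 | i = o3].
Proof.
case: i => [[|[|[|[|n]]]] Hi].
- by constructor 1; apply: val_inj.
- by constructor 2; apply: val_inj.
- by constructor 3; apply: val_inj.
- by constructor 4; apply: val_inj.
- by [].
Qed.

Lemma split4 (R : realType) d (T : measurableType d) (mu : {measure set T -> \bar R})
  (Z : T -> 'I_4) (A : set T) :
  measurable A -> (forall i, measurable [set w | Z w = i]) ->
  mu A = (\sum_(i < 4) mu (A `&` [set w | Z w = i]))%E.
Proof.
move=> mA mZ.
rewrite sum4.
rewrite {1}(_ : A = (((A `&` [set w | Z w = o0]) `|` (A `&` [set w | Z w = o1]))
   `|` (A `&` [set w | Z w = o2])) `|` (A `&` [set w | Z w = o3])); last first.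
  apply/seteqP; split => w /=.
    by move=> Aw; case: (ord4_cases (Z w)) => ->; tauto.
  by move=> [[[[]|[]]|[]]|[]].
have D : forall i j, i != j -> (A `&` [set w | Z w = i]) `&` (A `&` [set w | Z w = j]) = set0.
  move=> i j /eqP ij; apply/seteqP; split => w //= [[_ Hi] [_ Hj]]; apply: ij; by rewrite -Hi -Hj.
have M : forall i, measurable (A `&` [set w | Z w = i]) by move=> i; exact: measurableI.
rewrite measureU //; last 2 first.
- by apply: measurableU => //; apply: measurableU.
- by rewrite !setIUl D // (D o1 o3) // (D o2 o3) // !setU0.
rewrite measureU //; last 2 first.
- by apply: measurableU.
- by rewrite !setIUl D // (D o1 o2) // setU0.
rewrite measureU //.
by rewrite D.
Qed.

Lemma o0E : o0 = ord0. Proof. exact: val_inj. Qed.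

Lemma meas_pred (R : realType) d (Omega : measurableType d) (X : R -> Omega -> 'I_4)
  (mX : forall (t : R) (i : 'I_4), measurable [set w | X t w = i]) t (p : pred 'I_4) :
  measurable [set w | p (X t w)].
Proof.
pose F i := if p i then [set w | X t w = i] else set0.
have mF i : measurable (F i) by rewrite /F; case: (p i).
rewrite (_ : [set w | p (X t w)] = ((F o0 `|` F o1) `|` F o2) `|` F o3).
  by apply: measurableU => //; apply: measurableU => //; apply: measurableU.
apply/seteqP; split => w /=.
  move=> pw; rewrite /F; case: (ord4_cases (X t w)) => Ew; rewrite Ew in pw; rewrite pw /=; tauto.
rewrite /F; move=> [[[]|]|]; do ?case: ifP => //; by move=> ? ->.
Qed.

Lemma prob3 (R : realType) d (Omega : measurableType d) (P : probability Omega R)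
  (Pt : R -> 'M[R]_4) (X : R -> Omega -> 'I_4) (hX : markov_chain_from0 P Pt X)
  (t0 t1 t2 : R) (h0 : 0 <= t0) (h1 : t0 <= t1) (h2 : t1 <= t2) (p0 p1 p2 : pred 'I_4) :
  P [set w | p0 (X t0 w) /\ p1 (X t1 w) /\ p2 (X t2 w)] =
  (\sum_(i < 4) \sum_(j < 4) \sum_(l < 4)
     (if p0 i && p1 j && p2 l then Pt t0 o0 i * Pt (t1 - t0) i j * Pt (t2 - t1) j l else 0))%:E.
Proof.
case: hX => mX hX.
set S := [set w | _ /\ _ /\ _].
have mS : measurable S.
  rewrite (_ : S = [set w | p0 (X t0 w)] `&` ([set w | p1 (X t1 w)] `&` [set w | p2 (X t2 w)])) //.
  apply: measurableI; [exact: (@meas_pred R d Omega X mX t0 p0)|apply: measurableI; [exact: (@meas_pred R d Omega X mX t1 p1)|exact: (@meas_pred R d Omega X mX t2 p2)]].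
rewrite (@split4 R d Omega P (X t0)) //.
rewrite -sumEFin; apply: eq_bigr => i _.
rewrite (@split4 R d Omega P (X t1)) //; last exact: measurableI.
rewrite -sumEFin; apply: eq_bigr => j _.
rewrite (@split4 R d Omega P (X t2)) //; last by apply: measurableI => //; exact: measurableI.
rewrite -sumEFin; apply: eq_bigr => l _.
case H: (p0 i && p1 j && p2 l).
  pose tt k := nth 0 [:: t0; t1; t2] k.
  pose xx k := nth o0 [:: i; j; l] k.
  rewrite (_ : _ `&` _ = [set w | forall k, (k <= 2)%N -> X (tt k) w = xx k]).
    apply: eq_trans (hX 2%N tt xx _ _) _.
    - by [].
    - by move=> [|[|k]] //= _.
    - by rewrite !big_ord_recr big_ord0 /= mul1r o0E mulrA.
  move: H => /andP [/andP [H0 H1] H2].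
  apply/seteqP; split => w /=.
    by move=> [[[_ E0] E1] E2] [|[|[|k]]].
  move=> Hw; have := Hw 0%N isT; have := Hw 1%N isT; have := Hw 2%N isT => /= E2 E1 E0.
  by rewrite /S /= E0 E1 E2.
rewrite (_ : _ `&` _ = set0) ?measure0 //.
apply/seteqP; split => w /=; last by case. rewrite /S /=; move=> [[[[q0 [q1 q2]] E0] E1] E2].
by move: H; rewrite -E0 -E1 -E2 q0 q1 q2.
Qed.

Lemma col0 (R : realType) (a b c d e f g : R) (M : 'M[R]_4) i :
  (M *m Lam a b c d e f g) i o0 = M i o0 * (-(a+b+c)).
Proof. rewrite mxE sum4 !mxE /=. ring. Qed.

Lemma ode_exp (R : realType) (k : R) (p : R -> R) :
  (forall t, is_derive t (1:R) p (p t * (- k))) ->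
  forall t, p t * expR (k * t) = p 0.
Proof.
move=> dp t.
have -> : p 0 = p 0 * expR (k * 0) by rewrite mulr0 expR0 mulr1.
apply: (@is_derive_0_is_cst _ (fun s => p s * expR (k * s))) => x.
apply: trigger_derive.
rewrite /GRing.scale /=.
ring.
Qed.

Lemma P_deriv0 (R : realType) (a b c d e f g : R) (Pt : R -> 'M[R]_4)
  (hPt : is_transition_fn (Lam a b c d e f g) Pt) i j :
  is_derive (0:R) (1:R) (fun s => Pt s i j) (Lam a b c d e f g i j).
Proof. by have := hPt.2 0 i j; rewrite hPt.1 mul1mx. Qed.

Lemma Pi0_zero (R : realType) (a b c d e f g : R) (Pt : R -> 'M[R]_4)
  (hPt : is_transition_fn (Lam a b c d e f g) Pt) i :
  i != o0 -> forall t, Pt t i o0 = 0.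
Proof.
move=> i0 t.
have H := @ode_exp R (a+b+c) (fun s => Pt s i o0).
have := H (fun t => eq_ind _ (fun v => is_derive t 1 _ v) (hPt.2 t i o0) _ (col0 _ _ _ _ _ _ _ _ _ i)) t.
rewrite hPt.1 mxE (negbTE i0) /= => /eqP.
by rewrite mulf_eq0 (gt_eqF (expR_gt0 _)) orbF => /eqP.
Qed.

Lemma P00_pos (R : realType) (a b c d e f g : R) (Pt : R -> 'M[R]_4)
  (hPt : is_transition_fn (Lam a b c d e f g) Pt) t :
  0 < Pt t o0 o0.
Proof.
have H := @ode_exp R (a+b+c) (fun s => Pt s o0 o0).
have := H (fun t => eq_ind _ (fun v => is_derive t 1 _ v) (hPt.2 t o0 o0) _ (col0 _ _ _ _ _ _ _ _ _ o0)) t.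
rewrite hPt.1 mxE /= => E.
have : 0 < Pt t o0 o0 * expR ((a + b + c) * t) by rewrite E ltr01.
by rewrite pmulr_lgt0 ?expR_gt0.
Qed.

Lemma rzero (R : realType) (F : R -> R) (l : R) :
  (forall h, 0 <= h -> F h = 0) -> is_derive (0:R) (1:R) F l -> l = 0.
Proof.
move=> F0 [dF <-].
have H2 := cvg_dnbhs_at_right dF.
apply: (cvg_unique _ H2); first exact: norm_hausdorff.
apply: cvg_near_cst.
near=> h.
rewrite /= F0 ?F0 ?subrr ?scaler0 //.
rewrite addr0 /GRing.scale /= mulr1; apply/ltW.
near: h. exact: nbhs_right_gt.
Unshelve. all: by end_near.
Qed.

Lemma lin_comb (R : realType) (x y z : R) : x = y -> z = x - y -> z = 0.
Proof. by move=> -> ->; rewrite subrr. Qed.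

Theorem mainTheorem10 (R : realType) (a b c d e f g : R)
    (ha : 0 < a) (hb : 0 < b) (hc : 0 < c) (hd : 0 < d) (he : 0 < e)
    (hf : 0 < f) (hg : 0 < g) (hbcf : b + c != f)
    (disp : measure_display) (Omega : measurableType disp)
    (P : probability Omega R)
    (Pt : R -> 'M[R]_4) (X : R -> Omega -> 'I_4)
    (hPt : is_transition_fn (Lam a b c d e f g) Pt)
    (hX : markov_chain_from0 P Pt X) :
  ~ markov_own_filtration P (fun t w => coord2 (X t w)).
Proof.
move=> M.
pose al2 s0 k := Pt s0 o0 o1 * Pt k o1 o2 + Pt s0 o0 o3 * Pt k o3 o2.
pose q (j : 'I_4) h := Pt h j o1 + Pt h j o3.
pose r (j : 'I_4) h := Pt h j o0 + Pt h j o1 + Pt h j o2 + Pt h j o3.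
pose phi h := q o0 h * r o2 h - q o2 h * r o0 h.
have key : forall s0 k h, 0 <= s0 -> 0 <= k -> 0 <= h ->
    al2 s0 k * (Pt s0 o0 o0 * Pt k o0 o0) * phi h = 0.
  move=> s0 k h h0 k0 hh0.
  have s01 : s0 <= s0 + k by rewrite lerDl.
  have s12 : s0 + k <= s0 + k + h by rewrite lerDl.
  have ord : forall n, (n < 1)%N -> nth 0 [:: s0; s0 + k] n <= nth 0 [:: s0; s0 + k] n.+1.
    by case.
  have H := M 1%N (fun n => nth 0 [:: s0; s0 + k] n) (s0 + k + h)
            (fun n => nth false [:: true; false] n) true h0 ord s12.
  rewrite /= in H.
  have E1 : [set w | coord2 (X (s0 + k + h) w) = true /\
               (forall k1 : nat, (k1 <= 1)%N ->
                coord2 (X (nth 0 [:: s0; s0 + k] k1) w) = nth false [:: true; false] k1)]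
     = [set w | coord2 (X s0 w) /\ (fun i => ~~ coord2 i) (X (s0 + k) w) /\ coord2 (X (s0 + k + h) w)].
    apply/seteqP; split => w /=.
      move=> [Hu Hk]; have := Hk 0%N isT; have := Hk 1%N isT => /= -> ->; by rewrite Hu.
    move=> [H0 [/negbTE H1 H2]]; split => //; by case=> [|[|]].
  have E2 : [set w | coord2 (X (nth 0 [:: s0; s0 + k] 1) w) = nth false [:: true; false] 1]
     = [set w | (fun _ => true) (X s0 w) /\ (fun i => ~~ coord2 i) (X (s0 + k) w) /\ (fun _ => true) (X (s0 + k + h) w)].
    apply/seteqP; split => w /=.
      by move=> ->.
    by move=> [_ [/negbTE -> _]].
  have E3 : [set w | coord2 (X (s0 + k + h) w) = true /\
               coord2 (X (nth 0 [:: s0; s0 + k] 1) w) = nth false [:: true; false] 1]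
     = [set w | (fun _ => true) (X s0 w) /\ (fun i => ~~ coord2 i) (X (s0 + k) w) /\ coord2 (X (s0 + k + h) w)].
    apply/seteqP; split => w /=.
      by move=> [-> ->].
    by move=> [_ [/negbTE -> ->]].
  have E4 : [set w | (forall k1 : nat, (k1 <= 1)%N ->
                coord2 (X (nth 0 [:: s0; s0 + k] k1) w) = nth false [:: true; false] k1)]
     = [set w | coord2 (X s0 w) /\ (fun i => ~~ coord2 i) (X (s0 + k) w) /\ (fun _ => true) (X (s0 + k + h) w)].
    apply/seteqP; split => w /=.
      move=> Hk; have := Hk 0%N isT; have := Hk 1%N isT => /= -> ->; by [].
    move=> [H0 [/negbTE H1 _]]; by case=> [|[|]].
  rewrite E1 E2 E3 E4 in H.
  rewrite (@prob3 _ _ _ _ _ _ hX _ _ _ h0 s01 s12 coord2 (fun i => ~~ coord2 i) coord2) in H.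
  rewrite (@prob3 _ _ _ _ _ _ hX _ _ _ h0 s01 s12 (fun _ => true) (fun i => ~~ coord2 i) (fun _ => true)) in H.
  rewrite (@prob3 _ _ _ _ _ _ hX _ _ _ h0 s01 s12 (fun _ => true) (fun i => ~~ coord2 i) coord2) in H.
  rewrite (@prob3 _ _ _ _ _ _ hX _ _ _ h0 s01 s12 coord2 (fun i => ~~ coord2 i) (fun _ => true)) in H.
  rewrite -!EFinM in H; have {}H := EFin_inj H.
  have e1 : s0 + k - s0 = k by ring.
  have e2 : s0 + k + h - (s0 + k) = h by ring.
  rewrite e1 e2 !sum4 /= in H.
  rewrite (@Pi0_zero _ _ _ _ _ _ _ _ _ hPt o1 isT k) (@Pi0_zero _ _ _ _ _ _ _ _ _ hPt o2 isT k)
    (@Pi0_zero _ _ _ _ _ _ _ _ _ hPt o3 isT k) in H.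
  apply: (@lin_comb _ _ _ _ (esym H)).
  rewrite /al2 /phi /q /r.
  ring.
have D : forall i j, is_derive (0:R) (1:R) (fun s => Pt s i j) (Lam a b c d e f g i j).
  by move=> i j; exact: (@P_deriv0 _ _ _ _ _ _ _ _ _ hPt).
have P0 : forall i j, Pt 0 i j = (i == j)%:R by move=> i j; rewrite hPt.1 mxE.
have [[s0 [k [hs0 [hk nz]]]] | nex] :=
  pselect (exists s0 k, 0 <= s0 /\ 0 <= k /\ al2 s0 k != 0); last first.
  have Z : forall s0, 0 <= s0 -> Pt s0 o0 o1 * d + Pt s0 o0 o3 * g = 0.
    move=> s0 hs0.
    apply: (@rzero _ (fun k => Pt s0 o0 o1 * Pt k o1 o2 + Pt s0 o0 o3 * Pt k o3 o2)).
      move=> k hk; apply/eqP/negPn/negP => nz; apply: nex; exists s0, k; split => //.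
    apply: trigger_derive.
    by rewrite !mxE /= /GRing.scale.
  have : b * d + c * g = 0.
    apply: (@rzero _ (fun s0 => Pt s0 o0 o1 * d + Pt s0 o0 o3 * g)); first exact: Z.
    apply: trigger_derive.
    by rewrite !mxE /= /GRing.scale /=; ring.
  move=> E; have : 0 < b * d + c * g by rewrite addr_gt0 // mulr_gt0.
  by rewrite E ltxx.
have Hphi : forall h, 0 <= h -> phi h = 0.
  move=> h hh; have := key s0 k h hs0 hk hh.
  move/eqP; rewrite !mulf_eq0 (negbTE nz) (gt_eqF (@P00_pos _ _ _ _ _ _ _ _ _ hPt s0)) (gt_eqF (@P00_pos _ _ _ _ _ _ _ _ _ hPt k)) /=.
  by move/eqP.
have : b + c - f = 0.
  apply: (@rzero _ phi) => //.
  rewrite /phi /q /r.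
  apply: trigger_derive.
  by rewrite !P0 !mxE /= /GRing.scale /=; ring.
move/eqP; rewrite subr_eq0 => /eqP bcf.
by move: hbcf; rewrite bcf eqxx.
Qed.
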